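(* Let $d\in\mathbb{N}$, $C>0$, $N\ge Cd$ and $t>0$. Then for every $x\in\mathbb{R}^d$ with $|x|\ge N(1+t/N)^{1/2}$, $$|Q\cap(B^2_N-x)|=|\{y\in Q: x+y\in B^2_N\}|\le 2e^{-ct^2},\qquad\text{where } c=\frac{7}{32}\frac{C^2}{(C+1)^2}.$$
   Context: $Q=[-1/2,1/2]^d$ is the unit cube, $B^2_N=\{x\in\mathbb{R}^d:|x|\le N\}$ is the closed Euclidean ball of radius $N$, $|\cdot|$ on sets denotes Lebesgue measure and on vectors the Euclidean norm. *)

(* Defs.v *)
From Stdlib Require Import Reals Lra.
Open Scope R_scope.

(* Points of R^d are represented as functions nat -> R; only the
   coordinates i < d are relevant. *)
Definition vec := nat -> R.

Fixpoint sum_lt (d : nat) (f : nat -> R) : R :=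
  match d with O => 0 | S k => sum_lt k f + f k end.
Fixpoint prod_lt (d : nat) (f : nat -> R) : R :=
  match d with O => 1 | S k => prod_lt k f * f k end.

Definition enorm (d : nat) (x : vec) : R := sqrt (sum_lt d (fun i => x i ^ 2)).

Definition vadd (x y : vec) : vec := fun i => x i + y i.

Definition cube (d : nat) (y : vec) : Prop :=
  forall i, (i < d)%nat -> -1/2 <= y i <= 1/2.

Definition ball (d : nat) (N : R) (z : vec) : Prop := enorm d z <= N.

Definition in_box (d : nat) (a b : vec) (y : vec) : Prop :=
  forall i, (i < d)%nat -> a i <= y i <= b i.
Definition box_vol (d : nat) (a b : vec) : R := prod_lt d (fun i => b i - a i).

(* Lebesgue (outer) measure of A ⊆ R^d is at most s:
   Lebesgue outer measure = inf over countable covers by boxes of the total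
   volume; "inf <= s" unfolds to: for every eps > 0 there is a countable cover
   by (nondegenerate-ordered) boxes whose volumes sum to at most s + eps. *)
Definition lebesgue_measure_le (d : nat) (A : vec -> Prop) (s : R) : Prop :=
  forall eps, 0 < eps ->
    exists (a b : nat -> vec),
      (forall k i, (i < d)%nat -> a k i <= b k i) /\
      (forall y, A y -> exists k, in_box d (a k) (b k) y) /\
      (forall n, sum_f_R0 (fun k => box_vol d (a k) (b k)) n <= s + eps).

(* Main.v *)
Require Import Defs.
From Coquelicot Require Import Coquelicot.
From Stdlib Require Import Reals Lra Lia List.
Import Defs.
Open Scope R_scope.

Lemma sum_lt_ext n f g : (forall i, (i < n)%nat -> f i = g i) -> sum_lt n f = sum_lt n g.
Proof. induction n; simpl; intros H; auto. rewrite IHn by (intros; apply H; lia). rewrite H by lia. auto. Qed.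

Lemma sum_lt_le n f g : (forall i, (i < n)%nat -> f i <= g i) -> sum_lt n f <= sum_lt n g.
Proof. induction n; simpl; intros H. lra. assert (f n <= g n) by (apply H; lia).
  assert (sum_lt n f <= sum_lt n g) by (apply IHn; intros; apply H; lia). lra. Qed.

Lemma sum_lt_plus n f g : sum_lt n (fun i => f i + g i) = sum_lt n f + sum_lt n g.
Proof. induction n; simpl. lra. rewrite IHn. lra. Qed.

Lemma sum_lt_scal n c f : sum_lt n (fun i => c * f i) = c * sum_lt n f.
Proof. induction n; simpl. lra. rewrite IHn. lra. Qed.

Lemma sum_lt_const n c : sum_lt n (fun _ => c) = INR n * c.
Proof. induction n; simpl sum_lt. simpl. lra. rewrite IHn, S_INR. lra. Qed.

Lemma sum_lt_nn n f : (forall i, (i < n)%nat -> 0 <= f i) -> 0 <= sum_lt n f.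
Proof. intros H. replace 0 with (sum_lt n (fun _ => 0)). apply sum_lt_le; auto.
  rewrite sum_lt_const. lra. Qed.

Lemma sum_lt_Sl n f : sum_lt (S n) f = f 0%nat + sum_lt n (fun i => f (S i)).
Proof. induction n; simpl. lra. simpl in IHn. rewrite IHn. lra. Qed.

Lemma sum_lt_refl n f : sum_lt n f = sum_lt n (fun i => f (n - 1 - i)%nat).
Proof.
  revert f; induction n; intros f. reflexivity.
  rewrite (sum_lt_Sl n (fun i => f (S n - 1 - i)%nat)). replace (S n - 1 - 0)%nat with n by lia.
  simpl sum_lt at 1. rewrite (IHn f).
  rewrite (sum_lt_ext n (fun i => f (S n - 1 - S i)%nat) (fun i => f (n - 1 - i)%nat)).
  lra. intros; f_equal; lia.
Qed.

Lemma prod_lt_ext n f g : (forall i, (i < n)%nat -> f i = g i) -> prod_lt n f = prod_lt n g.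
Proof. induction n; simpl; intros H; auto. rewrite IHn by (intros; apply H; lia). rewrite H by lia. auto. Qed.

Lemma prod_lt_nn n f : (forall i, (i < n)%nat -> 0 <= f i) -> 0 <= prod_lt n f.
Proof. induction n; simpl; intros H. lra. apply Rmult_le_pos. apply IHn; intros; apply H; lia. apply H; lia. Qed.

Lemma prod_lt_le n f g : (forall i, (i < n)%nat -> 0 <= f i <= g i) -> prod_lt n f <= prod_lt n g.
Proof. induction n; simpl; intros H. lra.
  apply Rmult_le_compat. apply prod_lt_nn; intros; apply H; lia. apply H; lia.
  apply IHn; intros; apply H; lia. apply H; lia. Qed.

Lemma prod_lt_exp n f : prod_lt n (fun i => exp (f i)) = exp (sum_lt n f).
Proof. induction n; simpl. now rewrite exp_0. rewrite IHn, exp_plus. auto. Qed.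

Lemma sum_f_lt n f : sum_f_R0 f n = sum_lt (S n) f.
Proof. induction n; simpl. lra. simpl in IHn. rewrite IHn. auto. Qed.

Lemma sinh_nn z : 0 <= z -> 0 <= exp z - exp (- z).
Proof.
  intros. assert (exp (-z) <= exp z). { destruct (Req_dec z 0). subst. rewrite Ropp_0. lra.
  apply Rlt_le, exp_increasing. lra. } lra.
Qed.

Lemma k_nn z : 0 <= z -> 0 <= z * (exp z + exp (- z)) - (exp z - exp (- z)).
Proof.
  intros Hz. destruct (Req_dec z 0) as [->|Hz0].
  { rewrite Ropp_0. lra. }
  set (k := fun w => w * (exp w + exp (- w)) - (exp w - exp (- w))).
  destruct (MVT_cor2 k (fun w => w * (exp w - exp (-w))) 0 z) as [c [Hc1 Hc2]]; [lra| |].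
  { intros c _. apply is_derive_Reals. unfold k. auto_derive; auto. ring. }
  unfold k in Hc1. rewrite Ropp_0, Rmult_0_l in Hc1.
  change (k z) with (z * (exp z + exp (- z)) - (exp z - exp (- z))) in Hc1.
  assert (0 <= c * (exp c - exp (- c)) * (z - 0)).
  { apply Rmult_le_pos; [apply Rmult_le_pos|]; try lra. apply sinh_nn; lra. }
  lra.
Qed.

Lemma cosh_le0 z : 0 <= z -> exp z + exp (- z) <= 2 * exp (z ^ 2 / 2).
Proof.
  intros Hz. destruct (Req_dec z 0) as [->|Hz0].
  { rewrite Ropp_0, exp_0. replace (0^2/2) with 0 by field. rewrite exp_0. lra. }
  set (H := fun w => (exp w + exp (- w)) * exp (- (w ^ 2 / 2))).
  destruct (MVT_cor2 H (fun w => - (exp (- (w^2/2)) * (w * (exp w + exp (- w)) - (exp w - exp (- w))))) 0 z) as [c [Hc1 Hc2]]; [lra| |].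
  { intros c _. apply is_derive_Reals. unfold H. auto_derive; auto. replace (c * (c * 1) * / 2) with (c^2/2) by field. set (e := exp (-(c^2/2))). set (e1 := exp c). set (e2 := exp (-c)). field. }
  unfold H in Hc1. rewrite Ropp_0, exp_0 in Hc1.
  replace (0^2/2) with 0 in Hc1 by field. rewrite Ropp_0, exp_0 in Hc1.
  assert (0 <= exp (- (c^2/2)) * (c * (exp c + exp (- c)) - (exp c - exp (- c))) * (z - 0)).
  { apply Rmult_le_pos; [apply Rmult_le_pos|]; try lra. left; apply exp_pos. apply k_nn; lra. }
  assert (Hz2 : (exp z + exp (- z)) * exp (- (z ^ 2 / 2)) <= 2) by lra.
  assert (E: exp (- (z ^ 2 / 2)) * exp (z^2/2) = 1). { rewrite <- exp_plus. replace (- (z ^ 2 / 2) + z^2/2) with 0 by ring. apply exp_0. }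
  assert (0 < exp (z^2/2)) by apply exp_pos.
  apply Rmult_le_compat_r with (r := exp (z^2/2)) in Hz2; [|lra].
  rewrite Rmult_assoc, E, Rmult_1_r in Hz2. exact Hz2.
Qed.

Lemma cosh_le z : exp z + exp (- z) <= 2 * exp (z ^ 2 / 2).
Proof.
  destruct (Rle_dec 0 z). now apply cosh_le0.
  replace (z^2) with ((-z)^2) by ring. pattern z at 1; replace z with (- - z) by ring.
  rewrite Rplus_comm. apply cosh_le0. lra.
Qed.

Definition hh (m : nat) := / INR m.
Definition lo (m j : nat) := -1/2 + INR j * hh m.
Definition hi (m j : nat) := -1/2 + (INR j + 1) * hh m.
Definition uu (m j : nat) := -1/2 + (INR j + 1/2) * hh m.

Lemma hh_pos m : (1 <= m)%nat -> 0 < hh m.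
Proof. intros. unfold hh. apply Rinv_0_lt_compat. apply lt_0_INR. lia. Qed.

Lemma hh_m m : (1 <= m)%nat -> INR m * hh m = 1.
Proof. intros. unfold hh. field. apply not_0_INR. lia. Qed.

Lemma uu_refl m j : (j < m)%nat -> uu m (m - 1 - j) = - uu m j.
Proof. intros. unfold uu. rewrite !minus_INR by lia. simpl (INR 1).
  pose proof (hh_m m ltac:(lia)).
  match goal with |- ?a = ?b => assert (a - b = INR m * hh m - 1) by field end. lra. Qed.

Lemma uu_bound m j : (1 <= m)%nat -> (j < m)%nat -> uu m j ^ 2 <= 1/4.
Proof. intros. unfold uu. pose proof (hh_m m H). pose proof (hh_pos m H).
  assert (INR j + 1 <= INR m). { rewrite <- S_INR. apply le_INR. lia. }
  assert (0 <= INR j) by apply pos_INR.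
  assert (0 <= (INR j + 1/2) * hh m) by (apply Rmult_le_pos; lra).
  assert ((INR j + 1/2) * hh m <= INR m * hh m) by (apply Rmult_le_compat_r; lra).
  set (a := (INR j + 1/2) * hh m) in *. nra. Qed.

Lemma M_bound m s : (1 <= m)%nat ->
  hh m * sum_lt m (fun j => exp (s * uu m j)) <= exp (s ^ 2 / 8).
Proof.
  intros Hm.
  assert (E : sum_lt m (fun j => exp (s * uu m j)) = sum_lt m (fun j => exp (- (s * uu m j)))).
  { rewrite sum_lt_refl. apply sum_lt_ext. intros. rewrite uu_refl by lia. f_equal. ring. }
  assert (L : 2 * sum_lt m (fun j => exp (s * uu m j)) <= 2 * (INR m * exp (s^2/8))).
  { replace (2 * sum_lt m (fun j => exp (s * uu m j))) with
      (sum_lt m (fun j => exp (s * uu m j) + exp (- (s * uu m j)))).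
    2:{ rewrite sum_lt_plus, <- E. ring. }
    rewrite <- sum_lt_const, <- sum_lt_scal. apply sum_lt_le. intros j Hj.
    eapply Rle_trans. apply cosh_le. apply Rmult_le_compat_l. lra.
    destruct (Req_dec ((s * uu m j) ^ 2 / 2) (s^2/8)) as [->|]. lra.
    left; apply exp_increasing. pose proof (uu_bound m j Hm Hj).
    assert (0 <= s^2) by nra. assert ((s * uu m j)^2 = s^2 * uu m j ^2) by ring. nra. }
  pose proof (hh_m m Hm). pose proof (hh_pos m Hm).
  assert (sum_lt m (fun j => exp (s * uu m j)) <= INR m * exp (s^2/8)) by lra.
  apply Rmult_le_compat_l with (r := hh m) in H1; [|lra].
  assert (hh m * (INR m * exp (s ^ 2 / 8)) = exp (s^2/8)).
  { rewrite <- Rmult_assoc, (Rmult_comm (hh m)), H. ring. } lra.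
Qed.

Definition upd (n : nat) (v : vec) (c : R) : vec := fun i => if Nat.eqb i n then c else v i.
Definition zv : vec := fun _ => 0.

Fixpoint cov (x : vec) (m : nat) (n : nat) (a : R) : list (vec * vec) :=
  match n with
  | O => if Rle_dec 0 a then (zv, zv) :: nil else nil
  | S n' => flat_map (fun j => map (fun p => (upd n' (fst p) (lo m j), upd n' (snd p) (hi m j)))
                 (cov x m n' (a - x n' * uu m j + Rabs (x n') * hh m / 2))) (seq 0 m)
  end.

Definition vsum (n : nat) (L : list (vec * vec)) : R :=
  fold_right (fun p s => box_vol n (fst p) (snd p) + s) 0 L.

Lemma vsum_app n L1 L2 : vsum n (L1 ++ L2) = vsum n L1 + vsum n L2.
Proof. induction L1; simpl. lra. unfold vsum in *; simpl. rewrite IHL1. lra. Qed.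

Lemma vsum_flat n (f : nat -> list (vec*vec)) m :
  vsum n (flat_map f (seq 0 m)) = sum_lt m (fun j => vsum n (f j)).
Proof. induction m. reflexivity. rewrite seq_S, flat_map_app, vsum_app, IHm. simpl.
  rewrite app_nil_r. reflexivity. Qed.

Lemma vol_upd n a b c1 c2 : box_vol (S n) (upd n a c1) (upd n b c2) = box_vol n a b * (c2 - c1).
Proof. unfold box_vol. simpl. unfold upd at 3 4. rewrite Nat.eqb_refl. f_equal.
  apply prod_lt_ext. intros i Hi. unfold upd. destruct (Nat.eqb_spec i n). lia. auto. Qed.

Lemma vsum_map n L c1 c2 : vsum (S n) (map (fun p => (upd n (fst p) c1, upd n (snd p) c2)) L)
   = vsum n L * (c2 - c1).
Proof. induction L; simpl. unfold vsum; simpl; lra. unfold vsum in *; simpl.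
  rewrite IHL, vol_upd. lra. Qed.

Lemma hi_lo m j : hi m j - lo m j = hh m.
Proof. unfold hi, lo. lra. Qed.

Lemma exp_ge1 z : 0 <= z -> 1 <= exp z.
Proof. intros. rewrite <- exp_0. destruct (Req_dec z 0). subst; lra. left; apply exp_increasing; lra. Qed.

Lemma cov_vol x m (Hm : (1 <= m)%nat) lam (Hl : 0 <= lam) n : forall a,
  vsum n (cov x m n a) <= exp (lam * (a + sum_lt n (fun i => Rabs (x i) * hh m / 2)))
     * prod_lt n (fun i => hh m * sum_lt m (fun j => exp (- lam * x i * uu m j))).
Proof.
  induction n; intros a.
  - simpl. destruct (Rle_dec 0 a).
    + unfold vsum; simpl. unfold box_vol; simpl. rewrite Rplus_0_r, Rmult_1_r, Rplus_0_r.
      apply exp_ge1. apply Rmult_le_pos; lra.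
    + unfold vsum; simpl. rewrite Rmult_1_r. left; apply exp_pos.
  - simpl cov. rewrite vsum_flat.
    rewrite (sum_lt_ext _ _ (fun j => hh m * vsum n (cov x m n (a - x n * uu m j + Rabs (x n) * hh m / 2)))).
    2:{ intros. rewrite vsum_map, hi_lo. ring. }
    eapply Rle_trans. apply sum_lt_le. intros j Hj. apply Rmult_le_compat_l. left; apply hh_pos; auto.
    apply IHn.
    set (P := prod_lt n (fun i => hh m * sum_lt m (fun j => exp (- lam * x i * uu m j)))).
    set (D := sum_lt n (fun i => Rabs (x i) * hh m / 2)).
    rewrite (sum_lt_ext _ _ (fun j => (exp (lam * (a + (D + Rabs (x n) * hh m / 2))) * P * hh m) * exp (- lam * x n * uu m j))).
    2:{ intros j Hj. fold P. fold D.
        assert (E : exp (lam * (a - x n * uu m j + Rabs (x n) * hh m / 2 + D)) = exp (lam * (a + (D + Rabs (x n) * hh m / 2))) * exp (- lam * x n * uu m j)).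
        { rewrite <- exp_plus. f_equal. field. }
        rewrite E. ring. }
    rewrite sum_lt_scal. simpl prod_lt. simpl sum_lt. fold D. fold P. right. ring.
Qed.

Lemma cov_ord x m (Hm : (1 <= m)%nat) n : forall a p, In p (cov x m n a) -> forall i, fst p i <= snd p i.
Proof.
  induction n; intros a p Hp i; simpl in Hp.
  - destruct (Rle_dec 0 a); simpl in Hp; [|tauto]. destruct Hp as [<-|[]]. simpl; unfold zv; lra.
  - apply in_flat_map in Hp. destruct Hp as [j [_ Hj]]. apply in_map_iff in Hj.
    destruct Hj as [q [<- Hq]]. simpl. unfold upd. destruct (Nat.eqb i n).
    + pose proof (hi_lo m j). pose proof (hh_pos m Hm). lra.
    + eapply IHn; eauto.
Qed.

Lemma slab_aux m (Hm : (1 <= m)%nat) yv : -1/2 <= yv -> forall J, (J < m)%nat -> yv <= hi m J ->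
  exists j, (j <= J)%nat /\ lo m j <= yv <= hi m j.
Proof.
  intros H0. induction J; intros HJ H1.
  - exists 0%nat. split. lia. unfold lo. simpl. lra.
  - destruct (Rle_dec yv (hi m J)).
    + destruct (IHJ ltac:(lia) r) as [j [? ?]]. exists j. split; auto.
    + exists (S J). split; auto. split; auto. unfold lo, hi in *. rewrite S_INR. lra.
Qed.

Lemma slab m (Hm : (1 <= m)%nat) yv : -1/2 <= yv <= 1/2 -> exists j, (j < m)%nat /\ lo m j <= yv <= hi m j.
Proof.
  intros H. destruct (slab_aux m Hm yv (proj1 H) (m - 1) ltac:(lia)) as [j [? ?]].
  - unfold hi. rewrite minus_INR by lia. simpl (INR 1). pose proof (hh_m m Hm).
    replace ((INR m - 1 + 1) * hh m) with (INR m * hh m) by ring. lra.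
  - exists j. split; auto. lia.
Qed.

Lemma cov_cover x m (Hm : (1 <= m)%nat) n : forall a y, cube n y ->
  sum_lt n (fun i => x i * y i) <= a -> exists p, In p (cov x m n a) /\ in_box n (fst p) (snd p) y.
Proof.
  induction n; intros a y Hy Ha.
  - simpl in Ha. simpl. destruct (Rle_dec 0 a); [|lra]. exists (zv, zv). split. left; auto.
    intros i Hi. lia.
  - destruct (slab m Hm (y n) (Hy n ltac:(lia))) as [j [Hj Hs]].
    assert (Hc : cube n y) by (intros i Hi; apply Hy; lia).
    assert (Hb : sum_lt n (fun i => x i * y i) <= a - x n * uu m j + Rabs (x n) * hh m / 2).
    { simpl in Ha.
      assert (Ru : Rabs (y n - uu m j) <= hh m / 2).
      { unfold lo, hi, uu in *. apply Rabs_le. lra. }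
      assert (x n * (y n - uu m j) >= - (Rabs (x n) * (hh m / 2))).
      { pose proof (Rabs_pos (x n)).
        pose proof (Rle_abs (- (x n * (y n - uu m j)))). rewrite Rabs_Ropp in H0.
        assert (Rabs (x n * (y n - uu m j)) <= Rabs (x n) * (hh m / 2)).
        { rewrite Rabs_mult. apply Rmult_le_compat_l; auto. } lra. }
      assert (x n * (y n - uu m j) = x n * y n - x n * uu m j) by ring. lra. }
    destruct (IHn _ y Hc Hb) as [p [Hp Hin]].
    exists (upd n (fst p) (lo m j), upd n (snd p) (hi m j)). split.
    + simpl. apply in_flat_map. exists j. split. apply in_seq. lia.
      apply in_map_iff. exists p. split; auto.
    + intros i Hi. simpl. unfold upd. destruct (Nat.eqb_spec i n). subst; auto.
      apply Hin. lia.
Qed.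

Lemma box_vol_nn n a b : (forall i, a i <= b i) -> 0 <= box_vol n a b.
Proof. intros. unfold box_vol. apply prod_lt_nn. intros. specialize (H i). simpl. lra. Qed.

Lemma vsum_cons n p L : vsum n (p :: L) = box_vol n (fst p) (snd p) + vsum n L.
Proof. reflexivity. Qed.

Lemma vsum_nn n L : (forall p, In p L -> forall i, fst p i <= snd p i) -> 0 <= vsum n L.
Proof. induction L; intros H. unfold vsum; simpl; lra. rewrite vsum_cons.
  pose proof (box_vol_nn n (fst a) (snd a) (H a (or_introl eq_refl))).
  assert (0 <= vsum n L).
  { apply IHL. intros; apply H; right; auto. } apply Rplus_le_le_0_compat; assumption. Qed.

Lemma le_plus_r (u v : R) : 0 <= v -> u <= u + v.
Proof. intros; lra. Qed.

Lemma sum_nth d L : (1 <= d)%nat -> (forall p, In p L -> forall i, fst p i <= snd p i) ->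
  forall n, sum_f_R0 (fun k => box_vol d (fst (nth k L (zv,zv))) (snd (nth k L (zv,zv)))) n <= vsum d L.
Proof.
  intros Hd. induction L; intros H n.
  - assert (Z : box_vol d zv zv = 0).
    { destruct d. lia. unfold box_vol; simpl. unfold zv. ring. }
    rewrite sum_f_lt, (sum_lt_ext _ _ (fun _ => 0)). rewrite sum_lt_const. unfold vsum; simpl; lra.
    intros k _. destruct k; simpl; exact Z.
  - destruct n.
    + simpl sum_f_R0. simpl nth. rewrite vsum_cons.
      pose proof (vsum_nn d L (fun p Hp => H p (or_intror Hp))).
      apply le_plus_r. exact H0.
    + rewrite decomp_sum by lia. simpl pred. simpl nth at 1. rewrite vsum_cons.
      pose proof (IHL (fun p Hp => H p (or_intror Hp)) n).
      apply Rplus_le_compat_l. exact H0.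
Qed.

Lemma list_meas d (P : vec -> Prop) L s : (1 <= d)%nat ->
  (forall p, In p L -> forall i, fst p i <= snd p i) ->
  (forall y, P y -> exists p, In p L /\ in_box d (fst p) (snd p) y) ->
  vsum d L <= s -> lebesgue_measure_le d P s.
Proof.
  intros Hd Ho Hc Hs eps Heps.
  exists (fun k => fst (nth k L (zv,zv))), (fun k => snd (nth k L (zv,zv))). split; [|split].
  - intros k i _. destruct (nth_in_or_default k L (zv,zv)) as [I|E].
    + apply Ho; auto.
    + rewrite E. simpl. unfold zv; lra.
  - intros y Hy. destruct (Hc y Hy) as [p [Hp Hb]]. destruct (In_nth L p (zv,zv) Hp) as [k [_ Ek]].
    exists k. rewrite Ek. auto.
  - intros n. pose proof (sum_nth d L Hd Ho n). lra.
Qed.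

Lemma sum_lt_S n f : sum_lt (S n) f = sum_lt n f + f n.
Proof. reflexivity. Qed.

Lemma amqm x n : (sum_lt n (fun i => Rabs (x i))) ^ 2 <= INR n * sum_lt n (fun i => x i ^ 2).
Proof.
  induction n. simpl. lra.
  rewrite !sum_lt_S. rewrite S_INR.
  set (a := sum_lt n (fun i => Rabs (x i))) in *.
  set (A := sum_lt n (fun i => x i ^ 2)) in *.
  assert (Ha : 0 <= a) by (apply sum_lt_nn; intros; apply Rabs_pos).
  assert (HA : 0 <= A) by (apply sum_lt_nn; intros; apply pow2_ge_0).
  assert (Hb : Rabs (x n) ^ 2 = x n ^ 2) by (unfold Rabs; destruct Rcase_abs; ring).
  set (b := Rabs (x n)) in *. assert (0 <= b) by apply Rabs_pos. rewrite <- Hb.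
  destruct n.
  - simpl in *. unfold a. simpl. lra.
  - set (k := INR (S n)) in *. assert (1 <= k) by (unfold k; rewrite S_INR; pose proof (pos_INR n); lra).
    assert (0 <= (a - k * b) ^ 2) by apply pow2_ge_0.
    assert (k * (a + b)^2 <= k * ((k + 1) * (A + b ^ 2))).
    { assert (k * a^2 <= k * (k * A)) by (apply Rmult_le_compat_l; lra).
      nra. }
    apply Rmult_le_reg_l with k; lra.
Qed.

Lemma sq_expand x y n : sum_lt n (fun i => (x i + y i) ^ 2) =
  sum_lt n (fun i => x i ^ 2) + 2 * sum_lt n (fun i => x i * y i) + sum_lt n (fun i => y i ^ 2).
Proof. induction n. simpl. lra. rewrite !sum_lt_S, IHn. ring. Qed.
Theorem lemma5p2 (d : nat) (C N t : R)
  (hC : 0 < C) (hN0 : 0 < N) (hN : C * INR d <= N) (ht : 0 < t) :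
  forall x : vec,
    N * sqrt (1 + t / N) <= enorm d x ->
    lebesgue_measure_le d (fun y => cube d y /\ ball d N (vadd x y))
      (2 * exp (- ((7 / 32) * (C ^ 2 / (C + 1) ^ 2)) * t ^ 2)).
Proof.
  intros x Hx.
  set (S := sum_lt d (fun i => x i ^ 2)).
  assert (HS0 : 0 <= S) by (apply sum_lt_nn; intros; apply pow2_ge_0).
  assert (Hen : enorm d x = sqrt S) by reflexivity. rewrite Hen in Hx.
  assert (Hq : 0 < 1 + t / N) by (assert (0 < t / N) by (apply Rdiv_lt_0_compat; lra); lra).
  assert (Hsq : 0 < sqrt (1 + t / N)) by (apply sqrt_lt_R0; lra).
  assert (Hd : (1 <= d)%nat).
  { destruct d. 2: lia. exfalso. unfold S in Hx. simpl in Hx. rewrite sqrt_0 in Hx.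
    assert (0 < N * sqrt (1 + t / N)) by (apply Rmult_lt_0_compat; lra). lra. }
  assert (HSlow : N ^ 2 + t * N <= S).
  { assert (0 <= N * sqrt (1 + t / N)) by (apply Rmult_le_pos; lra).
    pose proof (Rmult_le_compat _ _ _ _ H H Hx Hx).
    rewrite sqrt_sqrt in H0 by lra.
    replace (N * sqrt (1 + t / N) * (N * sqrt (1 + t / N))) with (N * N * (sqrt (1 + t / N) * sqrt (1 + t / N))) in H0 by ring.
    rewrite sqrt_sqrt in H0 by lra.
    replace (N * N * (1 + t / N)) with (N ^ 2 + t * N) in H0 by (field; lra). lra. }
  set (L1 := sum_lt d (fun i => Rabs (x i))).
  assert (HL1 : 0 <= L1) by (apply sum_lt_nn; intros; apply Rabs_pos).
  pose proof (amqm x d) as Ham. fold L1 S in Ham.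
  set (B := N / C).
  assert (HB : INR d <= B).
  { unfold B. apply Rmult_le_reg_l with C; auto. replace (C * (N / C)) with N by (field; lra). lra. }
  assert (Hd1 : 1 <= INR d) by (replace 1 with (INR 1) by reflexivity; apply le_INR; auto).
  assert (HL1B : L1 ^ 2 <= B ^ 2 * S).
  { assert (INR d * S <= B ^ 2 * S).
    { apply Rmult_le_compat_r; auto. nra. } lra. }
  assert (HBpos : 0 < B) by (unfold B; apply Rdiv_lt_0_compat; lra).
  assert (Hev : forall y, cube d y -> ball d N (vadd x y) ->
     S + 2 * sum_lt d (fun i => x i * y i) <= N ^ 2 /\ - L1 / 2 <= sum_lt d (fun i => x i * y i)).
  { intros y Hy Hb. unfold ball, enorm in Hb.
    assert (Hs : sum_lt d (fun i => vadd x y i ^ 2) <= N ^ 2).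
    { assert (0 <= sum_lt d (fun i => vadd x y i ^ 2)) by (apply sum_lt_nn; intros; apply pow2_ge_0).
      rewrite <- (sqrt_sqrt (sum_lt d (fun i => vadd x y i ^ 2))) by auto.
      pose proof (sqrt_pos (sum_lt d (fun i => vadd x y i ^ 2))).
      pose proof (Rmult_le_compat _ _ _ _ H0 H0 Hb Hb). lra. }
    unfold vadd in Hs. rewrite sq_expand in Hs. fold S in Hs.
    assert (0 <= sum_lt d (fun i => y i ^ 2)) by (apply sum_lt_nn; intros; apply pow2_ge_0).
    split. lra.
    unfold L1. replace (- sum_lt d (fun i => Rabs (x i)) / 2) with (sum_lt d (fun i => - (1/2) * Rabs (x i))).
    2:{ rewrite sum_lt_scal. field. }
    apply sum_lt_le. intros i Hi. specialize (Hy i Hi).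
    assert (Rabs (y i) <= 1/2) by (apply Rabs_le; lra).
    pose proof (Rabs_pos (x i)).
    assert (Rabs (x i * y i) <= Rabs (x i) * (1/2)) by (rewrite Rabs_mult; apply Rmult_le_compat_l; lra).
    pose proof (Rle_abs (- (x i * y i))) as Hra. rewrite Rabs_Ropp in Hra. lra. }
  assert (Htarget : 0 < 2 * exp (- ((7 / 32) * (C ^ 2 / (C + 1) ^ 2)) * t ^ 2)).
  { pose proof (exp_pos (- ((7 / 32) * (C ^ 2 / (C + 1) ^ 2)) * t ^ 2)). lra. }
  destruct (Rle_dec S ((N + B) ^ 2)) as [Hsm | Hbig].
  2:{
    apply (list_meas d _ nil); auto.
    - intros p [].
    - intros y [Hy Hb]. exfalso. destruct (Hev y Hy Hb) as [E1 E2].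
      set (r := sqrt S).
      assert (Hr : r * r = S) by (apply sqrt_sqrt; auto).
      assert (Hr0 : 0 <= r) by apply sqrt_pos.
      apply Rnot_le_lt in Hbig.
      assert (Hr1 : N + B < r).
      { destruct (Rle_lt_dec r (N + B)); auto. exfalso.
        assert (r * r <= (N + B) * (N + B)) by (apply Rmult_le_compat; lra). nra. }
      assert (L1 <= B * r).
      { destruct (Rle_lt_dec L1 (B * r)); auto. exfalso.
        assert (0 <= B * r) by (apply Rmult_le_pos; lra).
        assert (B * r * (B * r) < L1 * L1) by (apply Rmult_le_0_lt_compat; lra).
        assert (B ^ 2 * S = B * r * (B * r)) by (rewrite <- Hr; ring).
        assert (L1 ^ 2 = L1 * L1) by ring. lra. }
      assert (r * r - B * r > N * N).
      { assert ((N + B) * N < r * (r - B)) by (apply Rmult_le_0_lt_compat; lra). nra. }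
      assert (N ^ 2 = N * N) by ring. lra.
    - change (vsum d nil) with 0; lra. }
  set (A := (S - N ^ 2) / 2).
  assert (HA : t * N / 2 <= A) by (unfold A; lra).
  assert (HA0 : 0 < A) by (assert (0 < t * N) by (apply Rmult_lt_0_compat; lra); lra).
  assert (HS : 0 < S) by nra.
  set (lam := 4 * A / S).
  assert (Hlam : 0 <= lam) by (unfold lam; apply Rlt_le, Rdiv_lt_0_compat; lra).
  destruct (INR_unbounded (4 * A * L1 / S)) as [m0 Hm0].
  set (m := Datatypes.S m0).
  assert (Hm : (1 <= m)%nat) by (unfold m; lia).
  assert (Hm1 : 4 * A * L1 / S < INR m).
  { unfold m. rewrite S_INR. lra. }
  pose proof (hh_pos m Hm) as Hh. pose proof (hh_m m Hm) as Hhm.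
  set (c := (7 / 32) * (C ^ 2 / (C + 1) ^ 2)).
  assert (Hc0 : 0 <= c) by (unfold c; apply Rmult_le_pos; [lra|]; apply Rdiv_le_0_compat; [apply pow2_ge_0|]; apply pow_lt; lra).
  assert (Hcl : c * t ^ 2 <= 2 * A ^ 2 / S).
  { assert (HcN : c * (N + B) ^ 2 = 7 / 32 * N ^ 2) by (unfold c, B; field; lra).
    apply Rmult_le_reg_r with S; auto.
    replace (2 * A ^ 2 / S * S) with (2 * A ^ 2) by (field; lra).
    assert (c * t ^ 2 * S <= c * t ^ 2 * (N + B) ^ 2).
    { apply Rmult_le_compat_l; auto. apply Rmult_le_pos; auto. apply pow2_ge_0. }
    assert (c * t ^ 2 * (N + B) ^ 2 = 7/32 * (t * N) ^ 2) by (replace (c * t ^ 2 * (N + B) ^ 2) with (t ^ 2 * (c * (N + B) ^ 2)) by ring; rewrite HcN; field).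
    assert ((t * N) ^ 2 <= 4 * A ^ 2).
    { assert (0 <= t * N) by (apply Rmult_le_pos; lra).
      assert ((t * N) * (t * N) <= (2 * A) * (2 * A)) by (apply Rmult_le_compat; lra). nra. }
    assert (0 <= (t * N) ^ 2) by apply pow2_ge_0. lra. }
  assert (Hexp : lam * (- A + L1 * hh m / 2) + lam ^ 2 / 8 * S <= 1/2 + - c * t ^ 2).
  { assert (E : lam * (- A + L1 * hh m / 2) + lam ^ 2 / 8 * S = - (2 * A ^ 2 / S) + (4 * A * L1 / S) * (hh m / 2)).
    { unfold lam. field. lra. }
    rewrite E.
    assert ((4 * A * L1 / S) * (hh m / 2) <= INR m * (hh m / 2)).
    { apply Rmult_le_compat_r; lra. }
    lra. }
  apply (list_meas d _ (cov x m d (- A))); auto.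
  - apply cov_ord; auto.
  - intros y [Hy Hb]. apply cov_cover; auto. destruct (Hev y Hy Hb) as [E1 _]. unfold A. lra.
  - eapply Rle_trans. apply (cov_vol x m Hm lam Hlam d (- A)).
    rewrite (sum_lt_ext d _ (fun i => (hh m / 2) * Rabs (x i))) by (intros; field; lra).
    rewrite sum_lt_scal. fold L1.
    eapply Rle_trans.
    { apply Rmult_le_compat_l. left; apply exp_pos.
      apply (prod_lt_le d _ (fun i => exp ((- lam * x i) ^ 2 / 8))).
      intros i Hi. split.
      - apply Rmult_le_pos. lra. apply sum_lt_nn. intros; left; apply exp_pos.
      - apply M_bound; auto. }
    rewrite prod_lt_exp.
    rewrite (sum_lt_ext d _ (fun i => lam ^ 2 / 8 * x i ^ 2)) by (intros; field).
    rewrite sum_lt_scal. fold S. rewrite <- exp_plus.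
    assert (E' : lam * (- A + hh m / 2 * L1) + lam ^ 2 / 8 * S <= 1/2 + - c * t ^ 2).
    { replace (hh m / 2 * L1) with (L1 * hh m / 2) by field. exact Hexp. }
    apply Rle_trans with (exp (1/2 + - c * t ^ 2)).
    { destruct (Rle_lt_or_eq_dec _ _ E') as [Hl|He]. left; apply exp_increasing; auto. rewrite He; lra. }
    rewrite exp_plus. apply Rmult_le_compat_r. left; apply exp_pos.
    assert (exp (1/2) * exp (1/2) = exp 1) by (rewrite <- exp_plus; f_equal; field).
    pose proof exp_le_3. pose proof (exp_pos (1/2)). nra.
Qed.
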